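(* Let $S$ be an inverse semigroup whose semilattice of idempotents $\Sigma$ is a continuous poset. Then $S$ is a mirror semigroup if and only if, for every $\epsilon\in\Sigma$ and every pair of distinct elements $s,t\in H_\epsilon$, there exists $\varphi\in\Sigma$ with $\varphi \prec\!\!\!\prec \epsilon$ and $s\varphi\neq t\varphi$. In this case, $(S,\leqslant)$ is a continuous poset.
   Context: An inverse semigroup is a semigroup $S$ in which every $s$ has a unique $s^*$ with $ss^*s=s$ and $s^*ss^*=s^*$. $\Sigma=\Sigma(S)$ is the set of idempotents. The intrinsic order is $s\leqslant t$ iff $s=t\epsilon$ for some idempotent $\epsilon$. For $\epsilon\in\Sigma$, $H_\epsilon=\{s\in S : s^*s=\epsilon\}$. A subset is directed if nonempty and any two elements have an upper bound in it. $S$ is a mirror semigroup if every directed subset of $\Sigma$ having a supremum in $(\Sigma,\leqslant)$ also has a supremum in $(S,\leqslant)$. In a poset, $x$ is way-below $y$ if for every directed subset $D$ that has a supremum with $y\leqslant \sup D$, there is $d\in D$ with $x\leqslant d$; $\prec\!\!\!\prec$ denotes the way-below relation of the poset $(\Sigma,\leqslant)$. A poset is continuous if for every element $s$ the set of elements way-below $s$ is directed with supremum $s$. *)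

(* Defs.v *)
Definition directed {X : Type} (P : X -> Prop) (le : X -> X -> Prop)
  (D : X -> Prop) : Prop :=
  (forall d, D d -> P d) /\ (exists d, D d) /\
  (forall a b, D a -> D b -> exists c, D c /\ le a c /\ le b c).

Definition is_sup {X : Type} (P : X -> Prop) (le : X -> X -> Prop)
  (D : X -> Prop) (m : X) : Prop :=
  P m /\ (forall d, D d -> le d m) /\
  (forall u, P u -> (forall d, D d -> le d u) -> le m u).

Definition way_below {X : Type} (P : X -> Prop) (le : X -> X -> Prop)
  (x y : X) : Prop :=
  forall D : X -> Prop, directed P le D ->
  forall m, is_sup P le D m -> le y m -> exists d, D d /\ le x d.

Definition continuous_poset {X : Type} (P : X -> Prop) (le : X -> X -> Prop)
  : Prop :=
  forall s, P s ->
    directed P le (fun x => P x /\ way_below P le x s) /\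
    is_sup P le (fun x => P x /\ way_below P le x s) s.

Definition is_inverse {S : Type} (mul : S -> S -> S) (s u : S) : Prop :=
  mul (mul s u) s = s /\ mul (mul u s) u = u.

Record InverseSemigroup := {
  carrier :> Type;
  mul : carrier -> carrier -> carrier;
  mul_assoc : forall a b c, mul a (mul b c) = mul (mul a b) c;
  inverse_unique : forall s, exists! u, is_inverse mul s u
}.

Arguments mul {i}.

Section IS.
Variable S : InverseSemigroup.

Definition idem (e : S) : Prop := mul e e = e.

Definition ile (s t : S) : Prop := exists e, idem e /\ s = mul t e.

Definition H (eps : S) (s : S) : Prop :=
  exists u, is_inverse mul s u /\ mul u s = eps.

Definition mirror : Prop :=
  forall D : S -> Prop, directed idem ile D ->
  (exists m, is_sup idem ile D m) ->
  exists m, is_sup (fun _ => True) ile D m.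

End IS.

(* Main.v *)
Require Import Defs.
From Stdlib Require Import Classical ClassicalEpsilon.

Section Basics.
Variable S : InverseSemigroup.
Local Notation "a ** b" := (@mul S a b) (at level 40, left associativity).

Ltac norm := repeat rewrite mul_assoc.
Ltac normin H := repeat rewrite mul_assoc in H.

Definition inv (s : S) : S :=
  proj1_sig (constructive_definite_description _ (inverse_unique S s)).

Lemma inv_spec s : is_inverse (@mul S) s (inv s).
Proof. unfold inv. destruct constructive_definite_description. exact i. Qed.

Lemma inv_uniq s u : is_inverse (@mul S) s u -> u = inv s.
Proof.
  intro Hu. destruct (inverse_unique S s) as [x [Px Hx]].
  rewrite <- (Hx u Hu). apply Hx, inv_spec.
Qed.

Lemma inv_sym s u : is_inverse (@mul S) s u -> is_inverse (@mul S) u s.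
Proof. intros [A B]; split; auto. Qed.

Lemma inv_inv s : inv (inv s) = s.
Proof. symmetry. apply inv_uniq, inv_sym, inv_spec. Qed.

Lemma L1 s : s ** inv s ** s = s.
Proof. apply inv_spec. Qed.
Lemma L2 s : inv s ** s ** inv s = inv s.
Proof. apply inv_spec. Qed.
Lemma L1a a s : a ** s ** inv s ** s = a ** s.
Proof. rewrite <- !mul_assoc. rewrite (mul_assoc S s), L1. reflexivity. Qed.
Lemma L2a a s : a ** inv s ** s ** inv s = a ** inv s.
Proof. rewrite <- !mul_assoc. rewrite (mul_assoc S (inv s)), L2. reflexivity. Qed.

Lemma idem_a a e : idem S e -> a ** e ** e = a ** e.
Proof. intro He. rewrite <- mul_assoc. unfold idem in He. rewrite He. reflexivity. Qed.

Lemma idem_self e : idem S e -> is_inverse (@mul S) e e.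
Proof. intro He. unfold idem in He. split; rewrite He; exact He. Qed.

Lemma idem_inv e : idem S e -> inv e = e.
Proof. intro He. symmetry. apply inv_uniq, idem_self, He. Qed.

Lemma idem_mul e f : idem S e -> idem S f -> idem S (e ** f).
Proof.
  intros He Hf.
  set (x := inv (e ** f)).
  assert (Sx := inv_spec (e ** f)). fold x in Sx. destruct Sx as [X1 X2].
  normin X1. normin X2.
  assert (X2a : forall a, a ** x ** e ** f ** x = a ** x).
  { intro a. replace (a ** x ** e ** f ** x) with (a ** (x ** e ** f ** x)) by (norm; reflexivity). rewrite X2. reflexivity. }
  assert (Hy : is_inverse (@mul S) (e ** f) (f ** x ** e)).
  { split; norm.
    - rewrite (idem_a e f Hf), (idem_a (e ** f ** x) e He). exact X1.
    - rewrite (idem_a (f ** x) e He), (idem_a (f ** x ** e) f Hf). rewrite X2a. reflexivity. }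
  apply inv_uniq in Hy. fold x in Hy.
  assert (Xi : idem S x).
  { unfold idem. rewrite <- Hy. norm. rewrite X2a. reflexivity. }
  assert (E : e ** f = x).
  { rewrite <- (idem_inv x Xi). apply inv_uniq. apply inv_sym. subst x. apply inv_spec. }
  rewrite E. exact Xi.
Qed.

Lemma comm e f : idem S e -> idem S f -> e ** f = f ** e.
Proof.
  intros He Hf.
  assert (I1 := idem_mul e f He Hf). assert (I2 := idem_mul f e Hf He).
  unfold idem in *. normin I1. normin I2.
  assert (A1 : is_inverse (@mul S) (e ** f) (f ** e)).
  { split; norm.
    - rewrite (idem_a e f Hf), (idem_a (e ** f) e He). exact I1.
    - rewrite (idem_a f e He), (idem_a (f ** e) f Hf). exact I2. }
  assert (A2 : is_inverse (@mul S) (e ** f) (e ** f)).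
  { apply idem_self. apply idem_mul; assumption. }
  apply inv_uniq in A1. apply inv_uniq in A2. congruence.
Qed.

Lemma comm_a a e f : idem S e -> idem S f -> a ** e ** f = a ** f ** e.
Proof. intros He Hf. rewrite <- !mul_assoc, (comm e f He Hf). reflexivity. Qed.


Lemma idem_ss s : idem S (inv s ** s).
Proof. unfold idem. norm. apply L1a. Qed.

Lemma idem_ss' s : idem S (s ** inv s).
Proof. unfold idem. norm. rewrite L1. reflexivity. Qed.

Lemma inv_mul s t : inv (s ** t) = inv t ** inv s.
Proof.
  symmetry. apply inv_uniq. split.
  - replace (s ** t ** (inv t ** inv s) ** (s ** t)) with
      (s ** (t ** inv t) ** (inv s ** s) ** t) by (norm; reflexivity).
    rewrite (comm_a s (t ** inv t) (inv s ** s) (idem_ss' t) (idem_ss s)).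
    norm. rewrite L1. apply L1a.
  - replace (inv t ** inv s ** (s ** t) ** (inv t ** inv s)) with
      (inv t ** (inv s ** s) ** (t ** inv t) ** inv s) by (norm; reflexivity).
    rewrite (comm_a (inv t) (inv s ** s) (t ** inv t) (idem_ss s) (idem_ss' t)).
    norm. rewrite L2. apply L2a.
Qed.

Lemma inv_idem_r s g : idem S g -> inv (s ** g) ** (s ** g) = inv s ** s ** g.
Proof.
  intro Hg. rewrite inv_mul, (idem_inv g Hg).
  replace (g ** inv s ** (s ** g)) with (g ** (inv s ** s) ** g) by (norm; reflexivity).
  rewrite (comm g (inv s ** s) Hg (idem_ss s)). rewrite idem_a by exact Hg. reflexivity.
Qed.

Lemma ile_char s t : ile S s t -> s = t ** (inv s ** s).
Proof.
  intros [g [Hg E]]. subst s. rewrite (inv_idem_r t g Hg). norm. rewrite L1. reflexivity.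
Qed.

Lemma ile_refl s : ile S s s.
Proof. exists (inv s ** s). split. apply idem_ss. norm. rewrite L1. reflexivity. Qed.

Lemma ile_trans s t u : ile S s t -> ile S t u -> ile S s u.
Proof.
  intros [e [He E1]] [f [Hf E2]]. exists (f ** e). split. apply idem_mul; assumption.
  subst. norm. reflexivity.
Qed.

Lemma ile_idem e f : idem S f -> ile S e f -> e = f ** e /\ e = e ** f.
Proof.
  intros Hf [g [Hg E]]. subst e.
  assert (H0 : f ** (f ** g) = f ** g) by (norm; unfold idem in Hf; rewrite Hf; reflexivity).
  split. symmetry; exact H0.
  rewrite <- mul_assoc, (comm g f Hg Hf). norm. unfold idem in Hf; rewrite Hf. reflexivity.
Qed.

Lemma idem_below x f : idem S f -> ile S x f -> idem S x.
Proof. intros Hf [g [Hg E]]. subst. apply idem_mul; assumption. Qed.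

Lemma ile_lmul f y : idem S f -> ile S (f ** y) y.
Proof.
  intro Hf. exists (inv y ** f ** y). split.
  - unfold idem. replace (inv y ** f ** y ** (inv y ** f ** y)) with
      (inv y ** f ** (y ** inv y) ** f ** y) by (norm; reflexivity).
    rewrite (comm_a (inv y) f (y ** inv y) Hf (idem_ss' y)).
    norm. rewrite L2. rewrite idem_a by exact Hf. reflexivity.
  - replace (y ** (inv y ** f ** y)) with ((y ** inv y) ** f ** y) by (norm; reflexivity).
    rewrite (comm (y ** inv y) f (idem_ss' y) Hf). norm. rewrite L1a. reflexivity.
Qed.

Lemma ile_sq x y : ile S x y -> ile S (inv x ** x) (inv y ** y).
Proof.
  intros [g [Hg E]]. subst x. rewrite (inv_idem_r y g Hg). exists g. auto.
Qed.

Lemma H_eps eps s : H S eps s -> inv s ** s = eps.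
Proof. intros [u [Hu E]]. apply inv_uniq in Hu. subst. reflexivity. Qed.

End Basics.

Lemma wb_le_gen {X : Type} (P : X -> Prop) (le : X -> X -> Prop)
  (refl : forall x, le x x) x y : P y -> way_below P le x y -> le x y.
Proof.
  intros Py W.
  destruct (W (fun z => z = y)) with y as [d [Hd Hxd]].
  - split; [intros d -> ; exact Py|]. split; [exists y; reflexivity|].
    intros a b -> ->. exists y. auto.
  - split; [exact Py|]. split; [intros d ->; apply refl|]. intros u _ Hu. apply Hu. reflexivity.
  - apply refl.
  - subst. exact Hxd.
Qed.

Section Main.
Variable S : InverseSemigroup.
Local Notation "a ** b" := (@mul S a b) (at level 40, left associativity).
Ltac norm := repeat rewrite mul_assoc.
Ltac normin H := repeat rewrite mul_assoc in H.

Definition sepc : Prop :=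
  forall eps : S, idem S eps ->
    forall s t : S, H S eps s -> H S eps t -> s <> t ->
    exists phi : S, idem S phi /\ way_below (idem S) (ile S) phi eps /\
                    mul s phi <> mul t phi.

Lemma wb_le phi eps : idem S eps -> way_below (idem S) (ile S) phi eps -> ile S phi eps.
Proof. apply wb_le_gen. apply ile_refl. Qed.

Lemma sep_mirror : sepc -> mirror S.
Proof.
  intros Hsep D HD [eps Heps]. exists eps.
  destruct Heps as [Ie [Ub Le]]. split; [trivial|]. split; [exact Ub|].
  intros u _ Hu.
  assert (Hd : forall d, D d -> ile S d (inv S u ** u)).
  { intros d Dd. destruct HD as [HD _].
    assert (Q := ile_sq S d u (Hu d Dd)).
    rewrite (idem_inv S d (HD d Dd)) in Q. unfold idem in HD. rewrite (HD d Dd) in Q. exact Q. }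
  assert (Heu := Le _ (idem_ss S u) Hd).
  destruct (ile_idem S _ _ (idem_ss S u) Heu) as [E1 E1'].
  assert (E1a : forall a, a ** eps ** inv S u ** u = a ** eps).
  { intro a. replace (a ** eps ** inv S u ** u) with (a ** (eps ** (inv S u ** u))) by (norm; reflexivity).
    rewrite <- E1'. reflexivity. }
  normin E1'. symmetry in E1'.
  destruct (classic (u ** eps = eps)) as [Ee|Ne].
  - exists eps. split; [exact Ie|]. symmetry; exact Ee.
  - exfalso.
    assert (Hs : H S eps (u ** eps)).
    { exists (eps ** inv S u). split; [split|].
      - norm. rewrite (idem_a S u eps Ie). rewrite E1a. apply idem_a. exact Ie.
      - norm. rewrite E1'. unfold idem in Ie. rewrite Ie, Ie. reflexivity.
      - norm. rewrite E1'. exact Ie. }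
    assert (Ht : H S eps eps).
    { exists eps. split. apply idem_self; exact Ie. exact Ie. }
    destruct (Hsep eps Ie _ _ Hs Ht Ne) as [phi [Ip [Wp Np]]].
    destruct (Wp D HD eps (conj Ie (conj Ub Le)) (ile_refl S eps)) as [d [Dd Hpd]].
    assert (Ide : idem S d) by (apply (proj1 HD); exact Dd).
    assert (Hpe : ile S phi eps) by (apply ile_trans with d; auto).
    destruct (ile_idem S _ _ Ie Hpe) as [Pe _].
    destruct (ile_idem S _ _ Ide Hpd) as [Pd _].
    assert (Ud := ile_char S d u (Hu d Dd)).
    rewrite (idem_inv S d Ide) in Ud. rewrite Ide in Ud.
    apply Np.
    transitivity (u ** (eps ** phi)); [norm; reflexivity|]. rewrite <- Pe.
    transitivity (u ** (d ** phi)); [rewrite <- Pd; reflexivity|]. norm. rewrite <- Ud.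
    rewrite <- Pd. reflexivity.
Qed.

Lemma sup_S (Hm : mirror S) D eps : directed (idem S) (ile S) D ->
  is_sup (idem S) (ile S) D eps -> forall u, (forall d, D d -> ile S d u) -> ile S eps u.
Proof.
  intros HD Hsup u Hu.
  destruct (Hm D HD (ex_intro _ eps Hsup)) as [m [_ [Ubm Lem]]].
  destruct Hsup as [Ie [Ub Le]].
  assert (Hme : ile S m eps) by (apply Lem; auto).
  assert (Im := idem_below S m eps Ie Hme).
  apply ile_trans with m. apply Le; auto. apply Lem; auto.
Qed.

Lemma mirror_sep : continuous_poset (idem S) (ile S) -> mirror S -> sepc.
Proof.
  intros Hc Hm eps Ie s t Hs Ht Hst. apply NNPP; intro Hn.
  assert (Hall : forall phi, idem S phi -> way_below (idem S) (ile S) phi eps -> s ** phi = t ** phi).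
  { intros phi Ip Wp. apply NNPP; intro Q. apply Hn. exists phi. auto. }
  apply H_eps in Hs. apply H_eps in Ht.
  destruct (Hc eps Ie) as [Hdir Hsup].
  assert (Hst' : ile S eps (inv S s ** t)).
  { apply (sup_S Hm _ eps Hdir Hsup). intros phi [Ip Wp].
    exists phi. split; [exact Ip|].
    destruct (ile_idem S _ _ Ie (wb_le phi eps Ie Wp)) as [Pe _].
    transitivity (inv S s ** (s ** phi)).
    - rewrite <- Hs in Pe. rewrite <- mul_assoc in Pe. exact Pe.
    - rewrite (Hall phi Ip Wp). norm. reflexivity. }
  destruct Hst' as [g [Ig Eg]].
  apply Hst.
  assert (Es : s = s ** inv S s ** t ** g).
  { transitivity (s ** eps). rewrite <- Hs. norm. rewrite L1. reflexivity.
    rewrite Eg. norm. reflexivity. }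
  assert (Hle : ile S s t).
  { rewrite Es. apply ile_trans with (s ** inv S s ** t).
    exists g; auto. apply ile_lmul. apply idem_ss'. }
  rewrite (ile_char S s t Hle). rewrite Hs, <- Ht. rewrite mul_assoc. apply L1.
Qed.


Lemma wbS s phi : idem S phi -> way_below (idem S) (ile S) phi (inv S s ** s) ->
  way_below (fun _ => True) (ile S) (s ** phi) s.
Proof.
  intros Ip Wp D HD m [_ [Ub Le]] Hsm.
  set (E := fun e => exists d, D d /\ e = inv S d ** d).
  assert (dirE : directed (idem S) (ile S) E).
  { destruct HD as [_ [[d0 D0] Hp]]. split; [|split].
    - intros e [d [_ ->]]. apply idem_ss.
    - exists (inv S d0 ** d0). exists d0. auto.
    - intros a b [d1 [D1 ->]] [d2 [D2 ->]]. destruct (Hp d1 d2 D1 D2) as [c [Dc [L1' L2']]].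
      exists (inv S c ** c). split. exists c; auto. split; apply ile_sq; assumption. }
  assert (supE : is_sup (idem S) (ile S) E (inv S m ** m)).
  { split; [apply idem_ss|]. split.
    - intros e [d [Dd ->]]. apply ile_sq. apply Ub. exact Dd.
    - intros f If Hf.
      assert (Hmf : ile S m (m ** f)).
      { apply Le; [trivial|]. intros d Dd.
        assert (Ed := ile_char S d m (Ub d Dd)).
        destruct (ile_idem S _ _ If (Hf _ (ex_intro _ d (conj Dd eq_refl)))) as [Fd _].
        exists (inv S d ** d). split; [apply idem_ss|].
        rewrite Ed at 1. rewrite Fd at 1. norm. reflexivity. }
      apply ile_sq in Hmf. rewrite (inv_idem_r S m f If) in Hmf.
      apply ile_trans with (inv S m ** m ** f). exact Hmf. apply ile_lmul. apply idem_ss. }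
  destruct (Wp E dirE _ supE (ile_sq S s m Hsm)) as [e [[d [Dd ->]] Hpd]].
  exists d. split; [exact Dd|].
  exists phi. split; [exact Ip|].
  assert (Es := ile_char S s m Hsm).
  destruct (ile_idem S _ _ (idem_ss S s) (wb_le _ _ (idem_ss S s) Wp)) as [Pe _].
  destruct (ile_idem S _ _ (idem_ss S d) Hpd) as [Pd _].
  assert (Ed := ile_char S d m (Ub d Dd)).
  transitivity (m ** (inv S s ** s ** phi)).
  { rewrite Es at 1. norm. reflexivity. }
  rewrite <- Pe. transitivity (m ** (inv S d ** d ** phi)).
  { rewrite <- Pd. reflexivity. }
  replace (m ** (inv S d ** d ** phi)) with (m ** (inv S d ** d) ** phi) by (norm; reflexivity).
  rewrite <- Ed. reflexivity.
Qed.

Lemma part2 : continuous_poset (idem S) (ile S) -> mirror S ->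
  continuous_poset (fun _ : S => True) (ile S).
Proof.
  intros Hc Hm s _.
  set (eps := inv S s ** s).
  assert (Ie : idem S eps) by apply idem_ss.
  destruct (Hc eps Ie) as [Hdir Hsup].
  set (sD := fun z => exists phi, (idem S phi /\ way_below (idem S) (ile S) phi eps) /\ z = s ** phi).
  assert (sDsup : forall u, (forall z, sD z -> ile S z u) -> ile S s u).
  { intros u Hu.
    assert (Q : ile S eps (inv S s ** u)).
    { apply (sup_S Hm _ eps Hdir Hsup). intros phi [Ip Wp].
      assert (Z := ile_char S _ _ (Hu (s ** phi) (ex_intro _ phi (conj (conj Ip Wp) eq_refl)))).
      rewrite (inv_idem_r S s phi Ip) in Z. fold eps in Z.
      destruct (ile_idem S _ _ Ie (wb_le _ _ Ie Wp)) as [Pe _].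
      rewrite <- Pe in Z.
      exists phi. split; [exact Ip|].
      transitivity (inv S s ** (s ** phi)).
      - rewrite mul_assoc. exact Pe.
      - rewrite Z. norm. reflexivity. }
    destruct Q as [g [Ig Eg]].
    assert (Es : s = s ** inv S s ** u ** g).
    { transitivity (s ** eps). unfold eps. norm. rewrite L1. reflexivity.
      rewrite Eg. norm. reflexivity. }
    rewrite Es. apply ile_trans with (s ** inv S s ** u).
    exists g; auto. apply ile_lmul. apply idem_ss'. }
  assert (dirsD : directed (fun _ => True) (ile S) sD).
  { destruct Hdir as [_ [[p0 P0] Hp]]. split; [|split].
    - auto.
    - exists (s ** p0). exists p0. auto.
    - intros a b [p1 [P1 ->]] [p2 [P2 ->]].
      destruct (Hp p1 p2 P1 P2) as [p3 [P3 [Q1 Q2]]].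
      exists (s ** p3). split. exists p3; auto.
      destruct (ile_idem S _ _ (proj1 P3) Q1) as [_ R1].
      destruct (ile_idem S _ _ (proj1 P3) Q2) as [_ R2].
      split; [exists p1 | exists p2]; (split; [apply P1 || apply P2|]).
      + rewrite R1 at 1. norm. rewrite <- mul_assoc, (comm S p1 p3 (proj1 P1) (proj1 P3)).
        norm. reflexivity.
      + rewrite R2 at 1. norm. rewrite <- mul_assoc, (comm S p2 p3 (proj1 P2) (proj1 P3)).
        norm. reflexivity. }
  assert (supsD : is_sup (fun _ => True) (ile S) sD s).
  { split; [trivial|]. split.
    - intros z [phi [[Ip _] ->]]. exists phi. auto.
    - intros u _ Hu. apply sDsup. exact Hu. }
  assert (Wsub : forall z, sD z -> way_below (fun _ => True) (ile S) z s).
  { intros z [phi [[Ip Wp] ->]]. apply wbS; assumption. }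
  assert (Wle : forall x, way_below (fun _ => True) (ile S) x s -> ile S x s).
  { intros x W. apply (wb_le_gen (fun _ => True)); auto. apply ile_refl. }
  split.
  - split; [auto|]. split.
    + destruct Hdir as [_ [[p0 P0] _]]. exists (s ** p0). split; [trivial|].
      apply Wsub. exists p0. auto.
    + intros x y [_ Wx] [_ Wy].
      destruct (Wx sD dirsD s supsD (ile_refl S s)) as [z1 [Z1 H1]].
      destruct (Wy sD dirsD s supsD (ile_refl S s)) as [z2 [Z2 H2]].
      destruct dirsD as [_ [_ Hp]]. destruct (Hp z1 z2 Z1 Z2) as [z [Z [Q1 Q2]]].
      exists z. split. split; [trivial|]. apply Wsub; exact Z.
      split; eapply ile_trans; eauto.
  - split; [trivial|]. split.
    + intros d [_ W]. apply Wle; exact W.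
    + intros u _ Hu. apply sDsup. intros z Z. apply Hu. split; [trivial|]. apply Wsub; exact Z.
Qed.

End Main.

Theorem theorem5p5 (S : InverseSemigroup) :
  continuous_poset (idem S) (ile S) ->
  (mirror S <->
   (forall eps : S, idem S eps ->
    forall s t : S, H S eps s -> H S eps t -> s <> t ->
    exists phi : S, idem S phi /\ way_below (idem S) (ile S) phi eps /\
                    mul s phi <> mul t phi)) /\
  (mirror S -> continuous_poset (fun _ : S => True) (ile S)).
Proof.
  intro Hc. split.
  - split. apply mirror_sep; exact Hc. apply sep_mirror.
  - apply part2; exact Hc.
Qed.
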